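(* Let $X=(X_k)$ be a sequence of fuzzy numbers, $\theta=(k_r)$ a lacunary sequence, $m\ge0$ an integer, $p>0$ and $\beta\in(0,1]$. If $X\in w_p^\beta(F,\Delta^m)\cap N_\theta^\beta(p,F,\Delta^m)$ and $\limsup_r\frac{k_r}{k_{r-1}^\beta}<\infty$, then the $w_p^\beta(F,\Delta^m)$-limit and the $N_\theta^\beta(p,F,\Delta^m)$-limit of $X$ coincide.
   Context: A fuzzy number is a map $X:\mathbb{R}\to[0,1]$ which is normal, fuzzy convex, upper semicontinuous, with compact closure of $\{t:X(t)>0\}$; $L(\mathbb{R})$ is the set of fuzzy numbers. Level sets $[X]^\alpha=\{t:X(t)\ge\alpha\}$ ($\alpha\in(0,1]$), $[X]^0=\overline{\{t:X(t)>0\}}$, are compact intervals $[u^\alpha,v^\alpha]$. Subtraction: $[X-Y]^\alpha=[u_1^\alpha-v_2^\alpha,v_1^\alpha-u_2^\alpha]$. Metric: $d(X,Y)=\sup_{\alpha\in[0,1]}\max\{|u_1^\alpha-u_2^\alpha|,|v_1^\alpha-v_2^\alpha|\}$. $(\Delta^0X)_k=X_k$, $(\Delta^1X)_k=X_k-X_{k+1}$, $(\Delta^mX)_k=(\Delta^1(\Delta^{m-1}X))_k$. A lacunary sequence is an increasing integer sequence $\theta=(k_r)_{r\ge0}$ with $k_0=0$, $h_r=k_r-k_{r-1}\to\infty$; $I_r=(k_{r-1},k_r]$. $X_0\in L(\mathbb{R})$ is an $N_\theta^\beta(p,F,\Delta^m)$-limit of $X$ if $\lim_r\frac{1}{h_r^\beta}\sum_{k\in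 I_r}d(\Delta^mX_k,X_0)^p=0$; $X_0$ is a $w_p^\beta(F,\Delta^m)$-limit of $X$ if $\lim_{n\to\infty}\frac{1}{n^\beta}\sum_{k=1}^n d(\Delta^mX_k,X_0)^p=0$; the spaces consist of sequences having such a limit. *)

(* Defs.v *)
From HB Require Import structures.
From mathcomp Require Import all_boot all_order all_algebra.
From mathcomp Require Import all_classical all_reals all_analysis.
Set Implicit Arguments. Unset Strict Implicit. Unset Printing Implicit Defensive.
Import Order.TTheory GRing.Theory Num.Theory.
Import numFieldNormedType.Exports.
Local Open Scope classical_set_scope.
Local Open Scope ring_scope.

Definition is_fuzzy_number {R : realType} (X : R -> R) : Prop :=
  [/\ (forall t, 0 <= X t <= 1),
      (exists t, X t = 1),
      (forall s t l, 0 <= l <= 1 ->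
         Num.min (X s) (X t) <= X (l * s + (1 - l) * t)),
      (forall t e, 0 < e -> exists2 d, 0 < d &
         forall s, `|s - t| < d -> X s < X t + e)
    & compact (closure [set t | 0 < X t])].

Definition level {R : realType} (X : R -> R) (a : R) : set R :=
  if 0 < a then [set t | a <= X t] else closure [set t | 0 < X t].

Definition lev_lo {R : realType} (X : R -> R) (a : R) : R := inf (level X a).
Definition lev_hi {R : realType} (X : R -> R) (a : R) : R := sup (level X a).

(* Subtraction of fuzzy numbers (Zadeh extension principle):
   (X - Y)(t) = sup_{s} min(X s, Y (s - t));
   for fuzzy numbers its level sets are [u1-v2, v1-u2]. *)
Definition fsub {R : realType} (X Y : R -> R) : R -> R :=
  fun t => sup (range (fun s => Num.min (X s) (Y (s - t)))).

Definition fdist {R : realType} (X Y : R -> R) : R :=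
  sup [set Num.max `|lev_lo X a - lev_lo Y a| `|lev_hi X a - lev_hi Y a|
      | a in `[0, 1]%classic].

Fixpoint fdelta {R : realType} (m : nat) (X : nat -> R -> R) : nat -> R -> R :=
  match m with
  | 0 => X
  | m'.+1 => fun k => fsub (fdelta m' X k) (fdelta m' X k.+1)
  end.

Definition hr (theta : nat -> nat) (r : nat) : nat := (theta r - theta r.-1)%N.

Definition lacunary (theta : nat -> nat) : Prop :=
  [/\ theta 0 = 0%N,
      (forall r, (theta r < theta r.+1)%N)
    & (forall M : nat, exists N : nat, forall r, (N <= r)%N -> (M <= hr theta r)%N)].

Definition Ntheta_limit {R : realType} (theta : nat -> nat) (beta p : R) (m : nat)
  (X : nat -> R -> R) (X0 : R -> R) : Prop :=
  (fun r : nat => ((hr theta r)%:R `^ beta)^-1 *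
     \sum_((theta r.-1).+1 <= k < (theta r).+1) fdist (fdelta m X k) X0 `^ p)
  @ \oo --> 0.

Definition w_limit {R : realType} (beta p : R) (m : nat)
  (X : nat -> R -> R) (X0 : R -> R) : Prop :=
  (fun n : nat => (n%:R `^ beta)^-1 *
     \sum_(1 <= k < n.+1) fdist (fdelta m X k) X0 `^ p)
  @ \oo --> 0.

(* Main.v *)
Require Import Defs.
From HB Require Import structures.
From mathcomp Require Import all_boot all_order all_algebra.
From mathcomp Require Import all_classical all_reals all_analysis.
From mathcomp Require Import ring lra zify.
Import Order.TTheory GRing.Theory Num.Theory.
Import numFieldNormedType.Exports.
Local Open Scope classical_set_scope.
Local Open Scope ring_scope.
Set Implicit Arguments. Unset Strict Implicit.

Section S.
Variable R : realType.

Definition supb (Y : R -> R) (B : R) := forall t, 0 < Y t -> `|t| <= B.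

Lemma closed_absle (B : R) : closed [set t : R | `|t| <= B].
Proof.
have -> : [set t : R | `|t| <= B] = [set t | t <= B] `&` [set t | - B <= t].
  apply/seteqP; split => t /=.
    by rewrite ler_norml => /andP[-> ->].
  by move=> [h1 h2]; rewrite ler_norml h1 h2.
by apply: closedI; [apply: closed_le | apply: closed_ge].
Qed.

Lemma closure_absle (S : set R) (B : R) :
  (forall t, S t -> `|t| <= B) -> forall t, closure S t -> `|t| <= B.
Proof.
move=> H t Ht.
have : closure [set t : R | `|t| <= B] t by apply: (closureS H).
by rewrite -(closure_id _).1 //; apply: closed_absle.
Qed.

Lemma fuzzy_supb (X : R -> R) : is_fuzzy_number X ->
  exists B, 0 <= B /\ forall t, closure [set t | 0 < X t] t -> `|t| <= B.
Proof.
case=> _ _ _ _ /compact_bounded [M [_ HM]].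
exists (Num.max M 0 + 1); split.
  by apply: addr_ge0 => //; rewrite le_max lexx orbT.
move=> t Ht; apply: (HM (Num.max M 0 + 1)) => //.
by rewrite (le_lt_trans (y:=Num.max M 0)) // ?ltrDl // le_max lexx.
Qed.

Lemma fuzzy_supb' (X : R -> R) : is_fuzzy_number X ->
  exists B, 0 <= B /\ supb X B.
Proof.
move=> /fuzzy_supb [B [B0 H]]; exists B; split => // t Ht.
by apply: H; apply: subset_closure.
Qed.

Lemma fsub_supb (A C : R -> R) a c : supb A a -> supb C c ->
  supb (fsub A C) (a + c).
Proof.
move=> hA hC t; rewrite /fsub => Ht.
rewrite leNgt; apply/negP => Hlt.
suff : sup (range (fun s => Num.min (A s) (C (s - t)))) <= 0.
  by rewrite leNgt Ht.
apply: ge_sup; first by exists (Num.min (A 0) (C (0 - t))); exists 0.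
move=> _ [s _ <-].
rewrite ge_min; case: (ltP 0 (A s)) => hs; last by [].
case: (ltP 0 (C (s - t))) => hs'; last by rewrite orbT.
have := hA _ hs; have := hC _ hs'.
move=> h1 h2; exfalso.
have : `|t| <= a + c.
  have -> : t = s - (s - t) by rewrite opprB addrC subrK.
  by apply: (le_trans (ler_normB _ _)); apply: lerD.
by rewrite leNgt Hlt.
Qed.

Lemma fdelta_supb (X : nat -> R -> R) : (forall k, is_fuzzy_number (X k)) ->
  forall m k, exists B, 0 <= B /\ supb (fdelta m X k) B.
Proof.
move=> HX; elim=> [|m IH] k /=; first exact: fuzzy_supb'.
have [a [a0 Ha]] := IH k; have [c [c0 Hc]] := IH k.+1.
exists (a + c); split; first exact: addr_ge0.
exact: fsub_supb.
Qed.

Lemma sup_absle (S : set R) (B : R) : 0 <= B ->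
  (forall t, S t -> `|t| <= B) -> `|sup S| <= B.
Proof.
move=> B0 H; have [->|/set0P [x Sx]] := eqVneq S set0; first by rewrite sup0 normr0.
have ub : ubound S B by move=> t /H; rewrite ler_norml => /andP[].
rewrite ler_norml; apply/andP; split.
  have := H _ Sx; rewrite ler_norml => /andP[h _].
  apply: (le_trans h); apply: ub_le_sup => //; by exists B.
by apply: ge_sup => //; exists x.
Qed.

Lemma inf_absle (S : set R) (B : R) : 0 <= B ->
  (forall t, S t -> `|t| <= B) -> `|inf S| <= B.
Proof.
move=> B0 H; rewrite /inf normrN; apply: sup_absle => // _ [t St <-].
by rewrite normrN; apply: H.
Qed.

Lemma level_absle (Y : R -> R) B a : supb Y B -> forall t, level Y a t -> `|t| <= B.
Proof.
move=> H; rewrite /level; case: ifPn => ha t.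
  by move=> /= hat; apply: H; apply: lt_le_trans hat.
by apply: closure_absle.
Qed.

Lemma lev_lo_abs (Y : R -> R) B a : 0 <= B -> supb Y B -> `|lev_lo Y a| <= B.
Proof. move=> B0 H; apply: inf_absle => //; exact: level_absle. Qed.
Lemma lev_hi_abs (Y : R -> R) B a : 0 <= B -> supb Y B -> `|lev_hi Y a| <= B.
Proof. move=> B0 H; apply: sup_absle => //; exact: level_absle. Qed.

Definition T3 (Y Z : R -> R) a := Num.max `|lev_lo Y a - lev_lo Z a| `|lev_hi Y a - lev_hi Z a|.

Lemma fdistE Y Z : fdist Y Z = sup [set T3 Y Z a | a in `[0, 1]%classic].
Proof. by []. Qed.

Lemma T3_bound Y Z b c a : 0 <= b -> 0 <= c -> supb Y b -> supb Z c -> T3 Y Z a <= b + c.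
Proof.
move=> b0 c0 hY hZ; rewrite /T3 ge_max; apply/andP; split;
  apply: (le_trans (ler_normB _ _)); apply: lerD;
  by [apply: lev_lo_abs | apply: lev_hi_abs].
Qed.

Lemma fdist_ub Y Z b c a : 0 <= b -> 0 <= c -> supb Y b -> supb Z c ->
  a \in `[0, 1] -> T3 Y Z a <= fdist Y Z.
Proof.
move=> b0 c0 hY hZ ha; rewrite fdistE; apply: ub_le_sup.
  exists (b + c) => _ [x _ <-]; exact: T3_bound.
by exists a => //; rewrite inE in ha.
Qed.

Lemma fdist_le Y Z x : (forall a, a \in `[0, 1] -> T3 Y Z a <= x) -> fdist Y Z <= x.
Proof.
move=> H; rewrite fdistE; apply: ge_sup.
  exists (T3 Y Z 0), 0 => //=; rewrite in_itv /= lexx ler01 //.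
by move=> _ [a ha <-]; apply: H; rewrite inE.
Qed.

Lemma fdist_ge0 Y Z b c : 0 <= b -> 0 <= c -> supb Y b -> supb Z c -> 0 <= fdist Y Z.
Proof.
move=> b0 c0 hY hZ; apply: (le_trans (y := T3 Y Z 0)).
  by rewrite /T3 le_max normr_ge0.
by apply: (fdist_ub b0 c0 hY hZ); rewrite in_itv /= lexx ler01.
Qed.

Lemma tri3 (y z w : R) : `|z - w| <= `|y - z| + `|y - w|.
Proof.
by rewrite (le_trans (ler_distD y z w)) // [`|z - y|]distrC.
Qed.

Lemma fdist_tri Y Z W b c e : 0 <= b -> 0 <= c -> 0 <= e ->
  supb Y b -> supb Z c -> supb W e ->
  fdist Z W <= fdist Y Z + fdist Y W.
Proof.
move=> b0 c0 e0 hY hZ hW; apply: fdist_le => a ha.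
have h1 := fdist_ub b0 c0 hY hZ ha; have h2 := fdist_ub b0 e0 hY hW ha.
move: h1 h2; rewrite /T3 !ge_max => /andP[h1 h1'] /andP[h2 h2'].
by apply/andP; split; [apply: le_trans (lerD h1 h2) | apply: le_trans (lerD h1' h2')];
  apply: tri3.
Qed.

Lemma fuzzy_level (X : R -> R) a t : is_fuzzy_number X -> 0 < a <= 1 ->
  (a <= X t) <-> (lev_lo X a <= t <= lev_hi X a).
Proof.
move=> HX /andP[a0 a1].
have [B [B0 hB]] := fuzzy_supb' HX.
case: (HX) => hval [t1 ht1] hconv husc _.
have hl : level X a = [set t | a <= X t] by rewrite /level a0.
have bnd : forall s, a <= X s -> `|s| <= B.
  by move=> s hs; apply: hB; apply: lt_le_trans hs.
have ne : [set t | a <= X t] !=set0 by exists t1; rewrite /= ht1.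
have hub : has_ubound [set t | a <= X t].
  by exists B => s /bnd; rewrite ler_norml => /andP[].
have hlb : has_lbound [set t | a <= X t].
  by exists (- B) => s /bnd; rewrite ler_norml => /andP[].
rewrite /lev_lo /lev_hi hl; split.
  by move=> h; rewrite (ge_inf hlb h) (ub_le_sup hub h).
move=> /andP[hlo hhi].
rewrite leNgt; apply/negP => hlt.
have e0 : 0 < a - X t by rewrite subr_gt0.
have [d d0 hd] := husc t _ e0.
have [s1 Ss1 hs1] := inf_adherent d0 (conj ne hlb).
have [s2 Ss2 hs2] := sup_adherent d0 (conj ne hub).
have Hs1 : inf [set t | a <= X t] <= s1 by apply: ge_inf.
have Hs2 : s2 <= sup [set t | a <= X t] by apply: ub_le_sup.
have contra : forall s, a <= X s -> `|s - t| < d -> False.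
  move=> s hs hst; have := hd s hst; rewrite addrC subrK => h.
  by move: (le_lt_trans hs h); rewrite ltxx.
case: (ltP t s1) => ht1'.
  apply: (contra s1 Ss1); rewrite ger0_norm ?subr_ge0 ?ltW //.
  by move: hs1 hlo; lra.
case: (ltP s2 t) => ht2'.
  apply: (contra s2 Ss2); rewrite distrC ger0_norm ?subr_ge0 ?ltW //.
  by move: hs2 hhi; lra.
have : a <= X t.
  have [e12|ne12] := eqVneq s1 s2.
    by have -> : t = s2 by apply/eqP; rewrite eq_le ht2' -e12 ht1'.
  have lt12 : s1 < s2 by rewrite lt_neqAle ne12 (le_trans ht1' ht2').
  pose l := (s2 - t) / (s2 - s1).
  have d12 : 0 < s2 - s1 by rewrite subr_gt0.
  have hl0 : 0 <= l <= 1.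
    apply/andP; split; first by rewrite /l divr_ge0 ?subr_ge0 // ltW.
    by rewrite /l ler_pdivrMr // mul1r; move: ht1'; lra.
  have := hconv s1 s2 l hl0.
  have -> : l * s1 + (1 - l) * s2 = t.
    rewrite /l; field; by rewrite lt0r_neq0.
  by apply: le_trans; rewrite le_min; apply/andP; split; [exact: Ss1|exact: Ss2].
by rewrite leNgt hlt.
Qed.

Lemma fuzzy_eq (X Y : R -> R) : is_fuzzy_number X -> is_fuzzy_number Y ->
  (forall a, 0 < a <= 1 -> lev_lo X a = lev_lo Y a /\ lev_hi X a = lev_hi Y a) ->
  forall t, X t <= Y t.
Proof.
move=> HX HY H t; rewrite leNgt; apply/negP => hlt.
case: (HX) => hX _ _ _ _; case: (HY) => hY _ _ _ _.
have ha : 0 < X t <= 1.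
  by move: (hX t) (hY t) => /andP[_ ->] /andP[h _]; rewrite (le_lt_trans h hlt).
have := (fuzzy_level t HX ha).1 (lexx _).
case: (H _ ha) => -> -> /(fuzzy_level t HY ha).
by rewrite leNgt hlt.
Qed.

Lemma ev_of (u : nat -> R) : u @ \oo --> 0 ->
  forall eps, 0 < eps -> exists N, forall n, (N <= n)%N -> `|u n| < eps.
Proof.
move=> /cvgr0Pnorm_lt H eps e0; have [N _ HN] := H eps e0.
by exists N => n hn; apply: HN.
Qed.

Lemma core (theta : nat -> nat) (beta c : R) (D E : nat -> R) :
  theta 0 = 0%N -> (forall r, (theta r < theta r.+1)%N) ->
  0 < beta <= 1 -> 0 < c ->
  (forall k, 0 <= D k) -> (forall k, 0 <= E k) -> (forall k, c <= D k + E k) ->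
  (fun n : nat => (n%:R `^ beta)^-1 * \sum_(1 <= k < n.+1) D k) @ \oo --> 0 ->
  (fun r : nat => ((hr theta r)%:R `^ beta)^-1 *
     \sum_((theta r.-1).+1 <= k < (theta r).+1) E k) @ \oo --> 0 ->
  False.
Proof.
move=> th0 thinc /andP[b0 b1] c0 D0 E0 DE Hw HN.
have thmono : {homo theta : i j / (i <= j)%N >-> (i <= j)%N}.
  by apply: homo_leq => //; [exact: leq_trans | move=> i; apply: ltnW].
have thge : forall r, (r <= theta r)%N.
  by elim=> [|r IH] //; apply: leq_ltn_trans IH (thinc r).
set eps := c / 4.
have e0 : 0 < eps by rewrite /eps divr_gt0.
have [N1 HN1] := ev_of HN e0.
have [N2 HN2] := ev_of Hw e0.
have stepA : forall r, (N1 <= r)%N -> (1 <= r)%N ->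
    \sum_((theta r.-1).+1 <= k < (theta r).+1) E k <= eps * (hr theta r)%:R.
  move=> r hr1 hr0.
  have h1 : 1 <= (hr theta r)%:R :> R.
    rewrite ler1n /hr; case: r hr1 hr0 => // r _ _ /=.
    by rewrite subn_gt0.
  have hb0 : 0 < (hr theta r)%:R `^ beta by apply: powR_gt0; apply: lt_le_trans h1.
  have hb1 : (hr theta r)%:R `^ beta <= (hr theta r)%:R := ler1_powR h1 b1.
  have := HN1 r hr1; rewrite ger0_norm; last first.
    by apply: mulr_ge0; [rewrite invr_ge0 ltW | apply: sumr_ge0].
  rewrite mulrC -/(_ / _) ltr_pdivrMr // => hs.
  by apply: ltW; apply: lt_le_trans hs _; rewrite ler_wpM2l // ltW.
set N := maxn N1 1.
have stepB : forall j, \sum_((theta N).+1 <= k < (theta (N + j)%N).+1) E k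
    <= eps * (theta (N + j)%N - theta N)%:R.
  elim=> [|j IH]; first by rewrite addn0 big_geq // subnn mulr0.
  have m1 : (theta N <= theta (N + j)%N)%N by apply: thmono; rewrite leq_addr.
  have m2 := thinc (N + j)%N.
  rewrite addnS (big_cat_nat _ (n := (theta (N + j)%N).+1)) //=; last first.
    by apply: ltnW.
  have -> : (theta (N + j).+1 - theta N = (theta (N + j)%N - theta N) + hr theta (N + j).+1)%N.
    rewrite /hr /=; lia.
  rewrite natrD mulrDr; apply: lerD => //.
  have := stepA (N + j).+1; rewrite /=; apply.
    by apply: leq_trans (leq_maxl N1 1) _; rewrite ltnW // ltnS leq_addr.
  by [].
set K := \sum_(1 <= k < (theta N).+1) E k.
set R0 := (Num.truncn (2 * K / c)).+1.
set RR := maxn (maxn N N2) R0.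
have hNR : (N <= RR)%N by rewrite /RR leq_max leq_max leqnn.
have hN2R : (N2 <= RR)%N by rewrite /RR leq_max leq_max leqnn orbT.
have hR0R : (R0 <= RR)%N by rewrite /RR leq_max leqnn orbT.
set n := theta RR.
have hRn := thge RR.
have n1 : (1 <= n)%N.
  by apply: leq_trans hRn; apply: leq_trans hNR; rewrite leq_maxr.
have h1 : c * n%:R <= \sum_(1 <= k < n.+1) D k + \sum_(1 <= k < n.+1) E k.
  rewrite -big_split /= (_ : c * n%:R = \sum_(1 <= k < n.+1) c).
    by apply: ler_sum => k _; apply: DE.
  by rewrite sumr_const_nat subn1 /= mulr_natr.
have h2 : \sum_(1 <= k < n.+1) D k <= eps * n%:R.
  have hn1 : 1 <= n%:R :> R by rewrite ler1n.
  have hb0 : 0 < n%:R `^ beta by apply: powR_gt0; apply: lt_le_trans hn1.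
  have hb1 : n%:R `^ beta <= n%:R := ler1_powR hn1 b1.
  have := HN2 n (leq_trans hN2R hRn); rewrite ger0_norm; last first.
    by apply: mulr_ge0; [rewrite invr_ge0 ltW | apply: sumr_ge0].
  rewrite mulrC -/(_ / _) ltr_pdivrMr // => hs.
  by apply: ltW; apply: lt_le_trans hs _; rewrite ler_wpM2l // ltW.
have h3 : \sum_(1 <= k < n.+1) E k <= K + eps * n%:R.
  rewrite (big_cat_nat _ (n := (theta N).+1)) //=; last by rewrite ltnS thmono.
  apply: lerD => //.
  have := stepB (RR - N)%N; rewrite subnKC // => h; apply: le_trans h _.
  apply: ler_wpM2l; [exact: ltW | rewrite ler_nat; exact: leq_subr].
have h4 : 2 * K / c < n%:R.
  apply: lt_le_trans (truncnS_gt _) _; rewrite ler_nat.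
  exact: leq_trans hR0R hRn.
move: h4; rewrite ltr_pdivrMr // => h4.
have : c * n%:R <= c / 2 * n%:R + K.
  apply: le_trans h1 _; move: h2 h3; rewrite /eps.
  set x := n%:R; set a := \sum_(_ <= _ < _) _; set b := \sum_(_ <= _ < _) _.
  move=> h2 h3; have -> : c / 2 * x = c / 4 * x + c / 4 * x by field.
  by move: h2 h3; lra.
by move: h4; nra.
Qed.
End S.

Theorem theorem2p16 (R : realType) (X : nat -> R -> R) (theta : nat -> nat)
  (m : nat) (p beta : R) (X0 X1 : R -> R) :
  (forall k, is_fuzzy_number (X k)) ->
  lacunary theta ->
  0 < p -> 0 < beta <= 1 ->
  is_fuzzy_number X0 -> is_fuzzy_number X1 ->
  w_limit beta p m X X0 ->
  Ntheta_limit theta beta p m X X1 ->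
  (exists M : R, exists N : nat, forall r, (N <= r)%N ->
     (theta r)%:R / ((theta r.-1)%:R `^ beta) <= M) ->
  X0 = X1.
Proof.
move=> HX [th0 thinc _] p0 hb H0 H1 Hw HN _.
have [b0 [b00 hb0]] := fuzzy_supb' H0.
have [b1 [b10 hb1]] := fuzzy_supb' H1.
have d0 : 0 <= fdist X0 X1 := fdist_ge0 b00 b10 hb0 hb1.
have dz : fdist X0 X1 = 0.
  apply/eqP; rewrite eq_le d0 andbT leNgt; apply/negP => dpos.
  apply: (@core R theta beta ((fdist X0 X1 / 2) `^ p)
    (fun k => fdist (fdelta m X k) X0 `^ p) (fun k => fdist (fdelta m X k) X1 `^ p)
    th0 thinc hb _ _ _ _ Hw HN).
  - by apply: powR_gt0; rewrite divr_gt0.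
  - by move=> k; apply: powR_ge0.
  - by move=> k; apply: powR_ge0.
  move=> k; have [B [B0 hB]] := fdelta_supb HX m k.
  have tri := fdist_tri B0 b00 b10 hB hb0 hb1.
  have e0 := fdist_ge0 B0 b00 hB hb0; have e1 := fdist_ge0 B0 b10 hB hb1.
  have hd2 : 0 <= fdist X0 X1 / 2 by rewrite divr_ge0.
  case: (leP (fdist X0 X1 / 2) (fdist (fdelta m X k) X0)) => hc.
    apply: le_trans (_ : _ <= fdist (fdelta m X k) X0 `^ p) _.
      by apply: ge0_ler_powR; rewrite ?nnegrE // ltW.
    by rewrite lerDl powR_ge0.
  apply: le_trans (_ : _ <= fdist (fdelta m X k) X1 `^ p) _.
    apply: ge0_ler_powR; rewrite ?nnegrE // ?ltW //.
    by move: tri hc; lra.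
  by rewrite lerDr powR_ge0.
have heq : forall a, 0 < a <= 1 -> lev_lo X0 a = lev_lo X1 a /\ lev_hi X0 a = lev_hi X1 a.
  move=> a /andP[a0 a1].
  have ha : a \in `[0, 1] by rewrite in_itv /= ltW.
  have := fdist_ub b00 b10 hb0 hb1 ha; rewrite dz /T3 ge_max => /andP[h1 h2].
  split; apply/eqP; rewrite -subr_eq0 -normr_le0 //.
apply: funext => t; apply/le_anti/andP; split; apply: fuzzy_eq => // a ha;
  by case: (heq a ha) => -> ->.
Qed.
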